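(* For every integer $k$, there exist a finite field $\mathbb{F}$ and a family $\{\mathcal{I}_j\}$ for which $\mathsf{S}_{\mathrm{L}}(\{\mathcal{I}_j\})>\mathsf{S}(\{\mathcal{I}_j\})+k$.
   Context: Network model: there are $n$ clients $c_1,\dots,c_n$, a positive integer $m$, and sets $\mathcal{I}_1,\dots,\mathcal{I}_n\subseteq[m]$ with $\bigcup_j\mathcal{I}_j=[m]$; write $\{\mathcal{I}_j\}$ for the family. The messages $X_1,\dots,X_m$ are mutually independent, each uniformly distributed on a finite field $\mathbb{F}$ with $|\mathbb{F}|>n$; client $c_j$ initially holds $\{X_i:i\in\mathcal{I}_j\}$; $\underline{X}=(X_1,\dots,X_m)^T$. All clients know all the sets $\mathcal{I}_j$. A protocol with $t$ rounds specifies, for each round $k=1,\dots,t$, a client $c_{i_k}$ that broadcasts (error-free, to everyone) one element of $\mathbb{F}$ which is a deterministic function of the messages held by $c_{i_k}$, of $k$, and of all previously broadcast symbols. $\mathbf{T}(\underline{X})\in\mathbb{F}^t$ is the vector of broadcast symbols; $t$ is the number of transmissions. A protocol is linear (over $\mathbb{F}$) if every broadcast symbol is an $\mathbb{F}$-linear combination of the messages held by the transmitting client, so $\mathbf{T}(\underline{X})=A\underline{X}$ for some $A\in\mathbb{F}^{t\times m}$. A protocol generates a secret key (SK) if there exist functions $\mathsf{k}_1,\dots,\mathsf{k}_n$ such that, with $K=\mathsf{k}_1(\{X_i:i\in\mathcal{I}_1\},\mathbf{T}(\underline{X}))$: (i) $\mathsf{k}_j(\{X_i:i\in\mathcal{I}_j\},\mathbf{T}(\underline{X}))=K$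 with probability 1 for all $j$; (ii) $K$ is uniform on $\mathbb{F}$; (iii) $I(K;\mathbf{T}(\underline{X}))=0$. $\mathsf{S}(\{\mathcal{I}_j\})$ (resp. $\mathsf{S}_{\mathrm{L}}(\{\mathcal{I}_j\})$) is the minimum number of transmissions over all protocols (resp. all linear protocols) that generate a SK, and $\infty$ if there is none. *)

(* Defs.v *)
From HB Require Import structures.
From mathcomp Require Import all_boot all_order all_algebra all_field.
Set Implicit Arguments. Unset Strict Implicit. Unset Printing Implicit Defensive.
Import Order.TTheory GRing.Theory Num.Theory.

(* Network: n clients, m messages; client j holds messages indexed by I j. *)
Definition msg (F : finFieldType) (m : nat) := {ffun 'I_m -> F}.

Definition valid_family (n m : nat) (I : 'I_n -> {set 'I_m}) : Prop :=
  \bigcup_(j < n) I j = [set: 'I_m].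

Definition agree_on (F : finFieldType) (m : nat) (A : {set 'I_m}) (x y : msg F m) : Prop :=
  forall i, i \in A -> x i = y i.

(* A protocol: number of rounds, transmitter of round k, and broadcast function of
   round k (a function of all messages and of previously broadcast symbols; locality,
   i.e. dependence only on the transmitter's messages, is required separately). *)
Record protocol (F : finFieldType) (n m : nat) := Protocol {
  nrounds : nat;
  who : nat -> 'I_n;
  bcast : nat -> msg F m -> seq F -> F }.

Fixpoint prefix (F : finFieldType) (n m : nat) (P : protocol F n m) (x : msg F m) (k : nat)
  : seq F :=
  match k with
  | 0 => [::]
  | k'.+1 => rcons (prefix P x k') (bcast P k' x (prefix P x k'))
  end.

Definition transcript (F : finFieldType) (n m : nat) (P : protocol F n m) (x : msg F m)
  : seq F := prefix P x (nrounds P).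

Definition wf_protocol (F : finFieldType) (n m : nat) (I : 'I_n -> {set 'I_m})
  (P : protocol F n m) : Prop :=
  forall k, k < nrounds P ->
    forall (x y : msg F m) (s : seq F), agree_on (I (who P k)) x y ->
      bcast P k x s = bcast P k y s.

Definition linear_protocol (F : finFieldType) (n m : nat) (I : 'I_n -> {set 'I_m})
  (P : protocol F n m) : Prop :=
  exists c : nat -> 'I_m -> F,
    forall k, k < nrounds P ->
      (forall i, i \notin I (who P k) -> c k i = 0%R) /\
      (forall x : msg F m, bcast P k x (prefix P x k) = (\sum_(i < m) c k i * x i)%R).

(* Uniform distribution of K : msg -> F when X is uniform on F^m. *)
Definition uniform_key (F : finFieldType) (m : nat) (K : msg F m -> F) : Prop :=
  forall a : F, #|[set x : msg F m | K x == a]| * #|F| = #|{: msg F m}|.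

(* Independence of K and T (equivalently I(K;T) = 0) under uniform X. *)
Definition indep_key (F : finFieldType) (m : nat) (K : msg F m -> F)
  (T : msg F m -> seq F) : Prop :=
  forall (a : F) (s : seq F),
    #|[set x : msg F m | (K x == a) && (T x == s)]| * #|{: msg F m}| =
    #|[set x : msg F m | K x == a]| * #|[set x : msg F m | T x == s]|.

(* The protocol generates a secret key: each client j computes k_j from its own
   messages and the transcript, all agree (with probability 1, i.e. for all x since
   X has full support) on a common K which is uniform and independent of T. *)
Definition generates_SK (F : finFieldType) (n m : nat) (I : 'I_n -> {set 'I_m})
  (P : protocol F n m) : Prop :=
  exists kf : 'I_n -> msg F m -> seq F -> F,
    (forall j (x y : msg F m) (s : seq F), agree_on (I j) x y -> kf j x s = kf j y s) /\
    exists K : msg F m -> F,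
      (forall j x, kf j x (transcript P x) = K x) /\
      uniform_key K /\ indep_key K (transcript P).

Definition SK_achievable (F : finFieldType) (n m : nat) (I : 'I_n -> {set 'I_m})
  (t : nat) : Prop :=
  exists P : protocol F n m, wf_protocol I P /\ nrounds P = t /\ generates_SK I P.

Definition SKL_achievable (F : finFieldType) (n m : nat) (I : 'I_n -> {set 'I_m})
  (t : nat) : Prop :=
  exists P : protocol F n m,
    wf_protocol I P /\ linear_protocol I P /\ nrounds P = t /\ generates_SK I P.

(* Main.v *)
Require Import Defs.
From HB Require Import structures.
From mathcomp Require Import all_boot all_order all_algebra all_field.
From mathcomp Require Import zify ring.
Import Order.TTheory GRing.Theory Num.Theory.
Set Implicit Arguments. Unset Strict Implicit. Unset Printing Implicit Defensive.
Local Open Scope ring_scope.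

Definition lin (F : finFieldType) m (c : 'I_m -> F) (x : msg F m) : F :=
  \sum_i c i * x i.

Lemma prefix_lin (F : finFieldType) n m (P : protocol F n m) (c : nat -> 'I_m -> F) :
  (forall k, (k < nrounds P)%N -> forall x : msg F m,
      bcast P k x (Defs.prefix P x k) = lin (c k) x) ->
  forall x k, (k <= nrounds P)%N -> Defs.prefix P x k = [seq lin (c j) x | j <- iota 0 k].
Proof.
move=> H x; elim=> [|k IH] Hk //.
have -> : iota 0 k.+1 = rcons (iota 0 k) k by rewrite -cats1 -addn1 iotaD.
rewrite map_rcons /= H // IH ?(ltnW Hk) //.
Qed.

Lemma kernel_vecs (F : finFieldType) m t (c : nat -> 'I_m -> F) :
  exists C : {set 'I_m}, (m <= #|C| + t)%N /\
  exists e : 'I_m -> msg F m, forall a, a \in C ->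
    (forall b, b \in C -> e a b = (a == b)%:R) /\
    forall k, (k < t)%N -> lin (c k) (e a) = 0.
Proof.
pose M : 'M[F]_(m, t) := \matrix_(i, k) c k i.
pose f := maxrankfun M.
exists [set q | q \notin codom f]; split.
  have h1 := cardsC [set q | q \in codom f].
  have h2 : #|[set q | q \in codom f]| = \rank M.
    by rewrite cardsE card_codom ?card_ord //; apply: maxrankfun_inj.
  have h3 := rank_leq_col M.
  have h4 : ~: [set q | q \in codom f] = [set q | q \notin codom f].
    by apply/setP => q; rewrite !inE.
  rewrite card_ord h4 h2 in h1.
  by rewrite -[X in (X <= _)%N]h1 addnC leq_add2l.
have sub i : (row i M <= rowsub f M)%MS.
  by rewrite eq_maxrowsub row_sub.
have /fin_all_exists [mu Hmu] : forall i, exists D : 'rV_(\rank M),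
    row i M = D *m rowsub f M by move=> i; apply/submxP.
exists (fun i => [ffun q => (q == i)%:R - \sum_a mu i 0 a * (q == f a)%:R]).
move=> a; rewrite inE => Ha; split.
  move=> b; rewrite inE => Hb; rewrite ffunE big1 ?subr0 ?(eq_sym b) //.
  move=> a' _; case: eqP => [Eb|]; last by rewrite mulr0.
  by move: Hb; rewrite Eb codom_f.
move=> k Hk; rewrite /lin.
under eq_bigr => q _ do rewrite ffunE mulrBr mulr_sumr.
rewrite sumrB (bigD1 a) //= eqxx mulr1 big1 ?addr0; last first.
  by move=> q /negPf ->; rewrite mulr0.
have := congr1 (fun A : 'rV_t => A 0 (Ordinal Hk)) (Hmu a).
rewrite !mxE /= => ->.
rewrite exchange_big /=; apply/eqP; rewrite subr_eq0; apply/eqP.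
apply: eq_bigr => a' _.
rewrite !mxE (bigD1 (f a')) //= eqxx mulr1 big1 ?addr0; last first.
  by move=> q /negPf ->; rewrite !mulr0.
by rewrite mulrC.
Qed.

Definition addv (F : finFieldType) m (x : msg F m) (a : F) (e : msg F m) : msg F m :=
  [ffun q => x q + a * e q].

Lemma lin_addv (F : finFieldType) m (c : 'I_m -> F) x a e :
  lin c (addv x a e) = lin c x + a * lin c e.
Proof.
rewrite /lin mulr_sumr -big_split; apply: eq_bigr => q _.
by rewrite ffunE mulrDr mulrCA.
Qed.

Lemma agree_sub (F : finFieldType) m (S : {set 'I_m}) (a b : 'I_m) (x y : msg F m) :
  S \subset [set a; b] -> x a = y a -> x b = y b -> agree_on S x y.
Proof.
move=> /subsetP HS ha hb q /HS; rewrite !inE => /orP [] /eqP ->; done.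
Qed.

Lemma three_in (T : finType) (C : {set T}) : (3 <= #|C|)%N ->
  exists i j l, [/\ i \in C, j \in C, l \in C & [/\ i != j, i != l & j != l]].
Proof.
move=> H.
have [i Hi] : exists i, i \in C by apply/set0Pn; rewrite -card_gt0; apply: leq_trans H.
have H1 := cardsD1 i C; rewrite Hi in H1.
have [j Hj] : exists j, j \in C :\ i.
  by apply/set0Pn; rewrite -card_gt0; move: H; rewrite H1 /=; case: #|_|.
have H2 := cardsD1 j (C :\ i); rewrite Hj in H2.
have [l Hl] : exists l, l \in C :\ i :\ j.
  by apply/set0Pn; rewrite -card_gt0; move: H; rewrite H1 H2 /=; case: #|_|.
move: Hj Hl; rewrite !inE => /andP [ji jC] /andP [lj /andP [li lC]].
by exists i, j, l; split => //; split; rewrite // eq_sym.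
Qed.

Lemma card_F_gt1 (F : finFieldType) : (1 < #|F|)%N.
Proof. exact: card_finNzRing_gt1. Qed.

Lemma lin_lb (F : finFieldType) n m (I : 'I_n -> {set 'I_m}) t :
  (forall i l : 'I_m, i != l -> exists c, I c \subset [set i; l]) ->
  @SKL_achievable F n m I t -> (m <= t + 2)%N.
Proof.
move=> HI [P [wf [[c Hc] [Ht [kf [Hkf [K [HK [Hu Hi]]]]]]]]].
have HT : forall x, transcript P x = [seq lin (c j) x | j <- iota 0 t].
  move=> x; rewrite /transcript (@prefix_lin _ _ _ P c) ?Ht //.
  by move=> k hk x0; rewrite -Ht in hk; have [_ ->] := Hc k hk.
have Kstep : forall c0 x y, transcript P x = transcript P y ->
    agree_on (I c0) x y -> K x = K y.
  move=> c0 x y hT hA; rewrite -(HK c0 x) -(HK c0 y) -hT.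
  exact: Hkf.
have Tlin : forall x y, (forall k, (k < t)%N -> lin (c k) x = lin (c k) y) ->
    transcript P x = transcript P y.
  move=> x y h; rewrite !HT; apply/eq_in_map => k; rewrite mem_iota => /andP [_ hk].
  exact: h.
have Kconst : (t + 3 <= m)%N -> forall x y, transcript P x = transcript P y -> K x = K y.
  move=> Htm x y hxy.
  have hl : forall k, (k < t)%N -> lin (c k) x = lin (c k) y.
    move=> k hk; have := congr1 (fun s => nth 0 s k) hxy; rewrite !HT.
    by rewrite !(nth_map 0%N) ?size_iota // nth_iota.
  have [C [HC [e He]]] := kernel_vecs t c.
  have [i [j [l [iC jC lC [ij il jl]]]]] : exists i j l, [/\ i \in C, j \in C, l \in C &
     [/\ i != j, i != l & j != l]].
    by apply: three_in; rewrite -(leq_add2r t); apply: leq_trans HC; rewrite addnC.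
  pose u q := y q - x q.
  pose z1 := addv x (u i) (e i).
  pose z2 := addv z1 (u j) (e j).
  pose z3 := addv z2 (u l) (e l).
  have [ei ki] := He i iC; have [ej kj] := He j jC; have [el kl] := He l lC.
  have Tz3 : transcript P z3 = transcript P y.
    apply: Tlin => k hk; rewrite !lin_addv ki // kj // kl // !mulr0 !addr0 hl //.
  have Tz2 : transcript P z2 = transcript P y.
    apply: Tlin => k hk; rewrite !lin_addv ki // kj // !mulr0 !addr0 hl //.
  have Tz1 : transcript P z1 = transcript P y.
    apply: Tlin => k hk; rewrite !lin_addv ki // !mulr0 !addr0 hl //.
  have [cjl Hjl] := HI j l jl; have [cil Hil] := HI i l il; have [cij Hij] := HI i j ij.
  have ji : j != i by rewrite eq_sym.
  have li : l != i by rewrite eq_sym.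
  have lj : l != j by rewrite eq_sym.
  have e1 : K x = K z1.
    apply: (Kstep cjl); first by rewrite Tz1.
    by apply: agree_sub Hjl _ _; rewrite /z1 ffunE ?ei // ?(negPf ij, negPf il) /= ?mulr0n ?mulr0 ?addr0.
  have e2 : K z1 = K z2.
    apply: (Kstep cil); first by rewrite Tz1 Tz2.
    by apply: agree_sub Hil _ _; rewrite [RHS]ffunE ?ej // ?(negPf ji, negPf jl) /= ?mulr0n ?mulr0 ?addr0.
  have e3 : K z2 = K z3.
    apply: (Kstep cij); first by rewrite Tz2 Tz3.
    by apply: agree_sub Hij _ _; rewrite [RHS]ffunE ?el // ?(negPf li, negPf lj) /= ?mulr0n ?mulr0 ?addr0.
  have e4 : K z3 = K y.
    apply: (Kstep cij) => //.
    apply: agree_sub Hij _ _; rewrite /z3 /z2 /z1 !ffunE ?ei ?ej ?el // ?eqxx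
      ?(negPf ij, negPf ji, negPf il, negPf li, negPf jl, negPf lj) /=
      ?mulr0n ?mulr1n ?mulr0 ?mulr1 ?addr0 /u.
    1,2: by rewrite addrC subrK.
  by rewrite e1 e2 e3 e4.
rewrite leqNgt; apply/negP => Hlt.
have Htm : (t + 3 <= m)%N by rewrite addnS.
pose x0 : msg F m := [ffun _ => 0].
have := Hi (K x0) (transcript P x0); have := Hu (K x0).
have -> : [set x : msg F m | (K x == K x0) && (transcript P x == transcript P x0)] =
          [set x : msg F m | transcript P x == transcript P x0].
  apply/setP => x; rewrite !inE.
  have [Hx|Hx] := eqVneq (transcript P x) (transcript P x0); last by rewrite andbF.
  by rewrite (Kconst Htm x x0 Hx) !eqxx.
have N0 : (0 < #|[set x : msg F m | transcript P x == transcript P x0]|)%N.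
  by apply/card_gt0P; exists x0; rewrite inE.
have K0 : (0 < #|[set x : msg F m | K x == K x0]|)%N.
  by apply/card_gt0P; exists x0; rewrite inE.
move=> hu; rewrite [X in _ = X]mulnC => /eqP; rewrite eqn_pmul2l // => /eqP hX.
move: hu; rewrite -hX => /eqP; rewrite -{2}[#|{: msg F m}|]muln1 eqn_pmul2l ?hX // => /eqP h1.
by have := card_F_gt1 F; rewrite h1.
Qed.

Lemma prefix_const (F : finFieldType) n m (P : protocol F n m) (h : nat -> msg F m -> F) :
  (forall k x s, bcast P k x s = h k x) ->
  forall x k, Defs.prefix P x k = [seq h j x | j <- iota 0 k].
Proof.
move=> H x; elim=> [|k IH] //.
have -> : iota 0 k.+1 = rcons (iota 0 k) k by rewrite -cats1 -addn1 iotaD.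
by rewrite map_rcons /= H IH.
Qed.

Definition uu (F : finFieldType) p (b : F -> 'F_p * 'F_p) T (x : msg F T.*2.+2) (i : nat)
  : 'F_p := (b (x (inord i))).1.
Definition vv (F : finFieldType) p (b : F -> 'F_p * 'F_p) T (x : msg F T.*2.+2) (i : nat)
  : 'F_p := (b (x (inord i))).2.
Definition lam p (i : nat) : 'F_p := i%:R.
Definition ww (F : finFieldType) p (b : F -> 'F_p * 'F_p) T (x : msg F T.*2.+2) (i : nat)
  : 'F_p := uu b x i - (uu b x 0 + lam p i * (uu b x 1 - uu b x 0)).
Definition KK (F : finFieldType) p (b : F -> 'F_p * 'F_p) (g : 'F_p * 'F_p -> F) T
  (x : msg F T.*2.+2) : F := g (uu b x 0, uu b x 1).
Definition bc (F : finFieldType) p (b : F -> 'F_p * 'F_p) (g : 'F_p * 'F_p -> F) T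
  (k : nat) (x : msg F T.*2.+2) : F := g (ww b x k.*2.+2, ww b x k.*2.+3).
Definition Psi (F : finFieldType) p (b : F -> 'F_p * 'F_p) (g : 'F_p * 'F_p -> F) T
  (x : msg F T.*2.+2) : msg F T.*2.+2 :=
  [ffun q : 'I_T.*2.+2 => if q == 0 :> nat then g (uu b x 0, uu b x 1)
     else if (q <= T)%N then g (ww b x (nat_of_ord q).*2, ww b x (nat_of_ord q).*2.+1)
     else g (vv b x (q - T.+1).*2, vv b x (q - T.+1).*2.+1)].

Lemma KK_Psi (F : finFieldType) p b g T (x : msg F T.*2.+2) :
  @KK F p b g T x = Psi b g x ord0.
Proof. by rewrite /Psi ffunE. Qed.

Lemma bc_Psi (F : finFieldType) p b g T (x : msg F T.*2.+2) k : (k < T)%N ->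
  @bc F p b g T k x = Psi b g x (inord k.+1).
Proof.
move=> hk; have hv : (inord k.+1 : 'I_T.*2.+2) = k.+1 :> nat.
  by rewrite inordK //; rewrite ltnS; lia.
by rewrite /Psi ffunE hv /= hk doubleS.
Qed.

Lemma Psi_inj (F : finFieldType) p b g T (gb : cancel g b) (bg : cancel b g) :
  injective (@Psi F p b g T).
Proof.
move=> x y hxy.
have hq q : Psi b g x q = Psi b g y q by rewrite hxy.
have h0 := hq ord0; rewrite !ffunE /= in h0.
move/(congr1 b): h0; rewrite !gb => /pair_equal_spec [u0 u1].
have hu : forall i, (i < T.*2.+2)%N -> uu b x i = uu b y i.
  move=> i hi.
  case: (ltnP i 2) => hi2.
    by case: i hi hi2 => [|[|]] //.
  have hn : (i./2 < T.*2.+2)%N by lia.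
  have := hq (Ordinal hn); rewrite !ffunE.
  change (nat_of_ord (Ordinal hn)) with (i./2).
  have -> : (i./2 == 0%N) = false by apply/negbTE; lia.
  have -> : (i./2 <= T)%N by lia.
  move/(congr1 b); rewrite !gb => /pair_equal_spec [w1 w2].
  have hw : ww b x i = ww b y i.
    have := odd_double_half i; case: (odd i) => /= hi'.
      by rewrite -hi' add1n.
    by rewrite -hi' add0n.
  move: hw; rewrite /ww u0 u1 => /eqP; rewrite (can2_eq (subrK _) (addrK _)) subrK.
  by move/eqP.
have hv : forall i, (i < T.*2.+2)%N -> vv b x i = vv b y i.
  move=> i hi.
  have hn : (T.+1 + i./2 < T.*2.+2)%N by lia.
  have := hq (Ordinal hn); rewrite !ffunE.
  change (nat_of_ord (Ordinal hn)) with (T.+1 + i./2)%N.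
  have -> : (T.+1 + i./2 == 0%N) = false by [].
  have -> : (T.+1 + i./2 <= T)%N = false by lia.
  rewrite addKn.
  move/(congr1 b); rewrite !gb => /pair_equal_spec [w1 w2].
  have := odd_double_half i; case: (odd i) => /= hi'.
    by rewrite -hi' add1n.
  by rewrite -hi' add0n.
apply/ffunP => q.
have := hu q (ltn_ord q); have := hv q (ltn_ord q).
rewrite /uu /vv inord_val => e2 e1.
apply: (can_inj bg); move: e1 e2; case: (b (x q)); case: (b (y q)) => ? ? ? ? /= -> ->.
by [].
Qed.


Lemma lam_inj p (hp : prime p) i j : (i < p)%N -> (j < p)%N -> lam p i = lam p j -> i = j.
Proof.
move=> hi hj /(congr1 (@nat_of_ord _)); rewrite /lam !val_Fp_nat // !modn_small //.
Qed.

Definition wdec (F : finFieldType) p (b : F -> 'F_p * 'F_p) (s : seq F) (i : nat) : 'F_p :=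
  if (i < 2)%N then 0 else
  let e := b (nth 0 s (i./2).-1) in if odd i then e.2 else e.1.

Definition dec (F : finFieldType) p (b : F -> 'F_p * 'F_p) (g : 'F_p * 'F_p -> F) T
  (i j : nat) (x : msg F T.*2.+2) (s : seq F) : F :=
  let ci := uu b x i - wdec b s i in
  let cj := uu b x j - wdec b s j in
  let bb := (ci - cj) / (lam p i - lam p j) in
  let a := ci - lam p i * bb in g (a, a + bb).

Lemma wdec_ok (F : finFieldType) p b g T (gb : cancel g b) (x : msg F T.*2.+2) i :
  (i < T.*2.+2)%N ->
  @wdec F p b [seq bc b g k x | k <- iota 0 T] i = ww b x i.
Proof.
move=> hi; rewrite /wdec; case: ltnP => hi2.
  rewrite /ww /lam; case: i hi hi2 => [|[|]] // _ _; rewrite ?mul0r ?mul1r; ring.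
rewrite (nth_map 0%N); last by rewrite size_iota; lia.
rewrite nth_iota; last by lia.
rewrite /bc gb add0n.
have e : ((i./2).-1).*2.+2 = (i./2).*2 by lia.
have := odd_double_half i; case: (odd i) => /= hi'.
  by rewrite e -[in RHS]hi' add1n.
by rewrite e -[in RHS]hi' add0n.
Qed.

Lemma dec_ok (F : finFieldType) p (hp : prime p) b g T (gb : cancel g b)
  (x : msg F T.*2.+2) i j :
  (i < T.*2.+2)%N -> (j < T.*2.+2)%N -> (T.*2.+2 <= p)%N -> i != j ->
  @dec F p b g T i j x [seq bc b g k x | k <- iota 0 T] = KK b g x.
Proof.
move=> hi hj hm hij; rewrite /dec !wdec_ok // /ww /KK.
set u0 := uu b x 0; set u1 := uu b x 1.
have hl : lam p i - lam p j != 0.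
  rewrite subr_eq0; apply/eqP => /(lam_inj hp) h.
  by move: hij; rewrite h ?eqxx //; lia.
have -> : uu b x i - (uu b x i - (u0 + lam p i * (u1 - u0))) -
    (uu b x j - (uu b x j - (u0 + lam p j * (u1 - u0)))) =
    (lam p i - lam p j) * (u1 - u0) by ring.
rewrite mulrAC mulfV // mul1r.
congr g; congr pair; ring.
Qed.

Definition Ipair m (c : 'I_(m * m)) : {set 'I_m} :=
  [set q : 'I_m | (divn c m == modn c m) || (q == divn c m :> nat) || (q == modn c m :> nat)].

Lemma mm_gt0 T : (0 < T.*2.+2 * T.*2.+2)%N.
Proof. by rewrite muln_gt0. Qed.

Definition c0 T : 'I_(T.*2.+2 * T.*2.+2) := Ordinal (mm_gt0 T).

Definition proto (F : finFieldType) p (b : F -> 'F_p * 'F_p) (g : 'F_p * 'F_p -> F) T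
  : protocol F (T.*2.+2 * T.*2.+2) T.*2.+2 :=
  Protocol T (fun _ => c0 T) (fun k x _ => bc b g k x).

Definition kfun (F : finFieldType) p (b : F -> 'F_p * 'F_p) (g : 'F_p * 'F_p -> F) T
  (c : 'I_(T.*2.+2 * T.*2.+2)) (x : msg F T.*2.+2) (s : seq F) : F :=
  if divn c T.*2.+2 == modn c T.*2.+2 then KK b g x
  else dec b g (divn c T.*2.+2) (modn c T.*2.+2) x s.

Lemma transcript_proto (F : finFieldType) p b g T (x : msg F T.*2.+2) :
  transcript (@proto F p b g T) x = [seq bc b g k x | k <- iota 0 T].
Proof. by rewrite /transcript (@prefix_const _ _ _ _ (fun k x => bc b g k x)). Qed.

Lemma Ipair_all m (c : 'I_(m * m)) : divn c m == modn c m -> Ipair c = setT.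
Proof. by move=> h; apply/setP => q; rewrite !inE h. Qed.

Lemma agree_all (F : finFieldType) m (x y : msg F m) : agree_on setT x y -> x = y.
Proof. by move=> h; apply/ffunP => q; apply: h; rewrite inE. Qed.

Lemma div_lt m (c : 'I_(m * m)) : (divn c m < m)%N.
Proof. by rewrite ltn_divLR ?ltn_ord //; case: m c => [[]|]. Qed.

Lemma mod_lt m (c : 'I_(m * m)) : (modn c m < m)%N.
Proof. by rewrite ltn_pmod //; case: m c => [[]|]. Qed.

Lemma kfun_local (F : finFieldType) p b g T c (x y : msg F T.*2.+2) s :
  agree_on (Ipair c) x y -> @kfun F p b g T c x s = kfun b g c y s.
Proof.
move=> h; rewrite /kfun; case: ifP => hc.
  by rewrite (Ipair_all hc) in h; rewrite (agree_all h).
have ei : x (inord (divn c T.*2.+2)) = y (inord (divn c T.*2.+2)).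
  apply: h; rewrite !inE inordK ?eqxx ?orbT //; exact: div_lt.
have ej : x (inord (modn c T.*2.+2)) = y (inord (modn c T.*2.+2)).
  apply: h; rewrite !inE inordK ?eqxx ?orbT //; exact: mod_lt.
by rewrite /dec /uu ei ej.
Qed.

Lemma count_fix (F : finFieldType) m (D : {set 'I_m}) (g : 'I_m -> F) :
  #|[set y : msg F m | [forall i in D, y i == g i]]| = (#|F| ^ (m - #|D|))%N.
Proof.
pose Fam := fun i : 'I_m => if i \in D then pred1 (g i) else predT.
rewrite (@eq_card _ _ (family Fam)); last first.
  move=> y; rewrite inE; apply/forall_inP/familyP => [H i | H i Hi].
    by rewrite /Fam; case: ifP => // /H.
  by have := H i; rewrite /Fam Hi.
rewrite card_family.
have -> : foldr muln 1%N [seq #|Fam x| | x : 'I_m] = (\prod_(i < m) #|Fam i|)%N.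
  by rewrite /image_mem foldrE big_map big_enum.
rewrite (bigID (mem D)) /= big1 ?mul1n; last first.
  by move=> i Hi; rewrite /Fam Hi card1.
rewrite (eq_bigr (fun _ => #|F|)); last first.
  by move=> i Hi; rewrite /Fam (negPf Hi).

have -> : (\prod_(i < m | i \notin D) #|F| = \prod_(i in [predC D]) #|F|)%N.
  by apply: eq_bigl => i; rewrite inE.
rewrite prod_nat_const; congr (_ ^ _)%N.
move: (cardC D); rewrite card_ord; move: #|[predC D]| #|D| => a b h.
by rewrite -h addKn.
Qed.

Lemma nl_sk (F : finFieldType) p (hp : prime p) (b : F -> 'F_p * 'F_p) g
  (gb : cancel g b) (bg : cancel b g) T (hm : (T.*2.+2 <= p)%N) :
  @SK_achievable F _ _ (@Ipair T.*2.+2) T.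
Proof.
set m := T.*2.+2.
exists (proto b g T); split; [|split; [done|]].
  move=> k hk x y s h; rewrite /= (@agree_all _ _ x y) // -(@Ipair_all m (c0 T)) //.
exists (@kfun F p b g T); split; first by move=> j x y s; apply: kfun_local.
exists (@KK F p b g T); split.
  move=> j x; rewrite transcript_proto /kfun; case: ifP => // hc.
  by apply: dec_ok => //; [exact: div_lt | exact: mod_lt | rewrite hc].
have Hpre : forall A : {set msg F m}, #|@Psi F p b g T @^-1: A| = #|A|.
  by move=> A; apply: card_preimset; apply: Psi_inj.
have hX : #|{: msg F m}| = (#|F| ^ m)%N by rewrite card_ffun card_ord.
have HB : forall a, #|[set x : msg F m | KK b g x == a]| = (#|F| ^ (m - 1))%N.
  move=> a.
  have -> : [set x : msg F m | KK b g x == a] =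
      @Psi F p b g T @^-1: [set y : msg F m | [forall i in [set ord0], y i == a]].
    apply/setP => x; rewrite !inE KK_Psi; apply/eqP/forall_inP => [e i | H].
      by rewrite inE => /eqP ->; rewrite e.
    by apply/eqP/H; rewrite inE.
  by rewrite Hpre count_fix cards1.
split.
  move=> a; rewrite HB hX -expnSr; congr (_ ^ _)%N.
move=> a s.
have hT x : transcript (proto b g T) x = [seq Psi b g x (inord k.+1) | k <- iota 0 T].
  rewrite transcript_proto; apply/eq_in_map => k; rewrite mem_iota => /andP [_ hk].
  exact: bc_Psi.
case: (eqVneq (size s) T) => hs; last first.
  have E : forall x, (transcript (proto b g T) x == s) = false.
    move=> x; apply/negbTE; apply: contra hs => /eqP <-.
    by rewrite hT size_map size_iota.
  have -> : [set x : msg F m | (KK b g x == a) && (transcript (proto b g T) x == s)] = set0.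
    by apply/setP => x; rewrite !inE E andbF.
  have -> : [set x : msg F m | transcript (proto b g T) x == s] = set0.
    by apply/setP => x; rewrite !inE E.
  by rewrite cards0 mul0n muln0.
pose D := [set i : 'I_m | (0 < i <= T)%N].
pose gs := fun i : 'I_m => nth 0 s (i.-1).
have Hproj : forall y : msg F m,
    ([seq y (inord k.+1) | k <- iota 0 T] == s) = [forall i in D, y i == gs i].
  move=> y; apply/eqP/forall_inP => [e i | H].
    rewrite inE => /andP [h1 h2]; apply/eqP; rewrite /gs -e.
    rewrite (nth_map 0%N); last by rewrite size_iota; lia.
    rewrite nth_iota; last by lia.
    by rewrite add0n prednK // inord_val.
  apply: (@eq_from_nth _ 0); first by rewrite size_map size_iota hs.
  move=> k; rewrite size_map size_iota => hk.
  rewrite (nth_map 0%N) ?size_iota // nth_iota // add0n.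
  have hk1 : (k.+1 < m)%N by rewrite /m; lia.
  have := H (inord k.+1); rewrite inE inordK // /gs inordK //= => /(_ _) /eqP -> //.
have HC : #|[set x : msg F m | transcript (proto b g T) x == s]| = (#|F| ^ (m - #|D|))%N.
  have -> : [set x : msg F m | transcript (proto b g T) x == s] =
      @Psi F p b g T @^-1: [set y : msg F m | [forall i in D, y i == gs i]].
    by apply/setP => x; rewrite !inE hT Hproj.
  by rewrite Hpre count_fix.
have D0 : ord0 \notin D by rewrite inE.
pose ga := fun i : 'I_m => if i == ord0 then a else gs i.
have HA : #|[set x : msg F m | (KK b g x == a) && (transcript (proto b g T) x == s)]| =
    (#|F| ^ (m - #|D|.+1))%N.
  have -> : [set x : msg F m | (KK b g x == a) && (transcript (proto b g T) x == s)] =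
      @Psi F p b g T @^-1: [set y : msg F m | [forall i in ord0 |: D, y i == ga i]].
    apply/setP => x; rewrite !inE hT Hproj KK_Psi.
    apply/andP/forall_inP => [[/eqP h1 /forall_inP h2] i | H].
      rewrite !inE /ga; case: eqP => [-> _ | hi /= hiD]; first by rewrite h1.
      by apply: h2; rewrite inE.
    split.
      by have := H ord0; rewrite !inE eqxx /ga eqxx => /(_ isT).
    apply/forall_inP => i hi; have := H i; rewrite !inE.
    have hi' := hi; rewrite inE in hi'; rewrite hi' orbT /ga => /(_ isT).
    case: (eqVneq i ord0) => [ei|ne]; first by move: D0; rewrite -ei hi.
    by [].
  by rewrite Hpre count_fix cardsU1 D0.
rewrite HA HB HC hX -!expnD; congr (_ ^ _)%N.
have hD : (#|D|.+1 <= m)%N.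
  by have := max_card (mem (ord0 |: D)); rewrite cardsU1 D0 card_ord.
move: hD; rewrite /m; move: (#|D|) => d hd; lia.
Qed.

Lemma pair_client m (i l : 'I_m) : i != l ->
  exists c : 'I_(m * m), @Ipair m c \subset [set i; l].
Proof.
move=> hil.
have hc : (i * m + l < m * m)%N.
  have hi := ltn_ord i; have hl := ltn_ord l.
  apply: (@leq_trans (i.+1 * m)); first by rewrite mulSn [(m + _)%N]addnC ltn_add2l.
  by rewrite leq_mul2r hi orbT.
have m0 : (0 < m)%N by case: m i {hil hc} l => [[]|].
exists (Ordinal hc); apply/subsetP => q; rewrite !inE /=.
rewrite divnMDl // divn_small // addn0 modnMDl modn_small //.
have hil2 : (i == l :> nat) = false by apply/negbTE.
by rewrite hil2.
Qed.

Theorem theorem4 (k : int) :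
  exists (F : finFieldType) (n m : nat) (I : 'I_n -> {set 'I_m}),
    (0 < n)%N /\ (n < #|F|)%N /\ valid_family I /\
    exists t : nat, @SK_achievable F n m I t /\
      forall t' : nat, @SKL_achievable F n m I t' -> (t%:Z + k < t'%:Z)%R.
Proof.
pose T := (absz k).+1.
have [p hmp hp] := prime_above T.*2.+2.
have [F _ hF] := pPrimePowerField hp (isT : (0 < 2)%N).
have hc : #|F| = #|{: 'F_p * 'F_p}| by rewrite card_prod card_Fp // hF mulnn.
pose b : F -> 'F_p * 'F_p := fun a => enum_val (cast_ord hc (enum_rank a)).
pose g : 'F_p * 'F_p -> F := fun z => enum_val (cast_ord (esym hc) (enum_rank z)).
have gb : cancel g b by move=> z; rewrite /b /g enum_valK cast_ordKV enum_rankK.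
have bg : cancel b g by move=> z; rewrite /b /g enum_valK cast_ordK enum_rankK.
exists F, (T.*2.+2 * T.*2.+2)%N, T.*2.+2, (@Ipair T.*2.+2).
split; first exact: mm_gt0.
split; first by rewrite hF -mulnn ltn_mul.
split.
  apply/setP => q; rewrite inE; apply/bigcupP; exists (c0 T) => //.
exists T; split; first (apply: nl_sk => //; [exact: hp | exact: ltnW hmp]).
move=> t' /(lin_lb (@pair_client _)) h.
have h2 : (T.*2 <= t')%N by move: h; rewrite -addn2 leq_add2r.
have hk : (k < T%:Z)%R.
  rewrite /T -addn1 PoszD abszE; apply: (@le_lt_trans _ _ `|k|); first exact: ler_norm.
  by rewrite ltrDl.
have h3 : (T%:Z + T%:Z <= t'%:Z)%R by rewrite -PoszD lez_nat addnn.
apply: (@lt_le_trans _ _ (T%:Z + T%:Z)) => //.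
by rewrite ltrD2l.
Qed.
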